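(* In the sequent calculus $NL^{\Rightarrow}$: if $\vdash_n\Sigma;\Gamma\Rightarrow\Delta$ and $\Sigma\le\Sigma'$, then $\vdash_n\Sigma';\Gamma\Rightarrow\Delta$.
   Context: Types $\tau ::= \delta \mid \nu \mid \langle\nu\rangle\tau$ ($\delta$ data types, $\nu$ name types). Terms $t ::= x \mid \mathsf{a} \mid c \mid f(\vec t)$ over variables $x$ and a disjoint countably infinite set of name-symbols $\mathsf a$; the signature contains, for all $\nu,\tau$, swapping $(a\;b)\cdot t$, abstraction $\langle a\rangle t$, equality $t\approx u$, freshness $a\#t$, besides constants $c$, function symbols $f$, relation symbols $p$. Formulas: $\top,\bot$, atoms, $\wedge,\vee,\supset,\forall x{:}\tau,\exists x{:}\tau$, and $\mathsf N\mathsf a{:}\nu.\phi$ (binding the name-symbol $\mathsf a$). Contexts $\Sigma::=\cdot\mid\Sigma,x{:}\tau\mid\Sigma\#\mathsf a{:}\nu$ (no symbol twice; $\Sigma\#\mathsf a{:}\nu$ means $\mathsf a$ is fresh for everything in $\Sigma$); $Tm_\Sigma$ = terms well-typed in $\Sigma$; $|\cdot|=\emptyset$, $|\Sigma,x{:}\tau|=|\Sigma|$, $|\Sigma\#\mathsf a{:}\nu|=|\Sigma|\cup\{\mathsf a\#t\mid t\in Tm_\Sigma\}$. $\Sigma\le\Sigma'$ means $Tm_\Sigma\subseteq Tm_{\Sigma'}$ and $|\Sigma|\subseteq|\Sigma'|$. Rules of $NL^{\Rightarrow}$ for $\Sigma;\Gamma\Rightarrow\Delta$: (i) classical G3c rules: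 initial sequents $\Sigma;\Gamma,P\Rightarrow P,\Delta$ ($P$ atomic), $\top R$, $\bot L$, context-sharing left/right rules for $\wedge,\vee,\supset,\forall,\exists$ (eigenvariables $x\notin\Sigma$ added to $\Sigma$, instantiating terms well-typed in $\Sigma$); (ii) $\mathsf N R$: from $\Sigma\#\mathsf a{:}\nu;\Gamma\Rightarrow\phi,\Delta$ infer $\Sigma;\Gamma\Rightarrow\mathsf N\mathsf a{:}\nu.\phi,\Delta$; $\mathsf N L$: from $\Sigma\#\mathsf a{:}\nu;\Gamma,\phi\Rightarrow\Delta$ infer $\Sigma;\Gamma,\mathsf N\mathsf a{:}\nu.\phi\Rightarrow\Delta$ ($\mathsf a\notin\Sigma$); (iii) nonlogical rules: $\approx R$: from $\Sigma;\Gamma,t\approx t\Rightarrow\Delta$ infer $\Sigma;\Gamma\Rightarrow\Delta$; $\approx S$: from $\Sigma;\Gamma,t\approx u,P(t),P(u)\Rightarrow\Delta$ infer $\Sigma;\Gamma,t\approx u,P(t)\Rightarrow\Delta$; for each instance $\bigwedge_j P_j\supset\bigvee_{i\le m}Q_i$ of (S1) $(a\;a)\cdot x\approx x$, (S2) $(a\;b)\cdot(a\;b)\cdot x\approx x$, (S3) $(a\;b)\cdot a\approx b$, (E1) $(a\;b)\cdot c\approx c$, (E2) $(a\;b)\cdot f(\vec t)\approx f((a\;b)\cdot\vec t)$, (E3) $p(\vec t)\supset p((a\;b)\cdot\vec t)$, (F1) $a\#x\wedge b\#x\supset(a\;b)\cdot x\approx x$, (F2) $a\#b$ ($a,b$ of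 distinct name types), (F3) $a\#a\supset\bot$, (F4) $a\#b\vee a\approx b$, (A1) $a\#y\wedge x\approx(a\;b)\cdot y\supset\langle a\rangle x\approx\langle b\rangle y$ (arbitrary well-typed terms), the rule: from $\Sigma;\Gamma,\vec P,Q_i\Rightarrow\Delta$ for all $i$ infer $\Sigma;\Gamma,\vec P\Rightarrow\Delta$; (A2) from $\Sigma;\Gamma,E,a\approx b,t\approx u\Rightarrow\Delta$ and $\Sigma;\Gamma,E,a\#u,t\approx(a\;b)\cdot u\Rightarrow\Delta$ infer $\Sigma;\Gamma,E\Rightarrow\Delta$, $E$ being $\langle a\rangle t\approx\langle b\rangle u$; (A3) from $\Sigma\vdash t:\langle\nu\rangle\sigma$ and $\Sigma,a{:}\nu,x{:}\sigma;\Gamma,t\approx\langle a\rangle x\Rightarrow\Delta$ ($a,x\notin\Sigma$) infer $\Sigma;\Gamma\Rightarrow\Delta$; (F) from $\Sigma\#\mathsf a{:}\nu;\Gamma\Rightarrow\Delta$ ($\mathsf a\notin\Sigma$) infer $\Sigma;\Gamma\Rightarrow\Delta$; ($\Sigma\#$) from $\Sigma;\Gamma,\mathsf a\#t\Rightarrow\Delta$ with $\mathsf a\#t\in|\Sigma|$ infer $\Sigma;\Gamma\Rightarrow\Delta$. $\vdash_n J$ means $J$ has a derivation of height at most $n$. *)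

(* Defs.v *)
(* Terms and formulas are in locally nameless style: free variables / free
   name-symbols are named (nat), bound ones are de Bruijn indices
   (BV for bound variables, BN for bound name-symbols). *)
From Stdlib Require Import List Permutation.
Import ListNotations.
Set Implicit Arguments.

(** Types  tau ::= delta | nu | <nu> tau  over data types D and name types N *)
Inductive ty (D N : Type) : Type :=
| TData : D -> ty D N
| TName : N -> ty D N
| TAbs  : N -> ty D N -> ty D N.
Arguments TData {D N}.
Arguments TName {D N}.
Arguments TAbs {D N}.

(** A (user) signature: data types, name types, constants, function symbols,
    relation symbols, with their typings.  Swapping, abstraction, equality and
    freshness are built in (for all types). *)
Record Sig := {
  sD : Type; sN : Type; sC : Type; sF : Type; sP : Type;
  cty : sC -> ty sD sN;
  fty : sF -> list (ty sD sN) * ty sD sN;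
  pty : sP -> list (ty sD sN)
}.

Section NL.
Variable Sg : Sig.

Definition type := ty (sD Sg) (sN Sg).

Inductive tm : Type :=
| Var   : nat -> tm
| BV    : nat -> tm
| Name  : nat -> tm
| BN    : nat -> tm
| Const : sC Sg -> tm
| App   : sF Sg -> list tm -> tm
| Swap  : tm -> tm -> tm -> tm
| Abs   : tm -> tm -> tm.

Inductive atom : Type :=
| AEq    : tm -> tm -> atom
| AFresh : tm -> tm -> atom
| ARel   : sP Sg -> list tm -> atom.

Inductive form : Type :=
| FTop | FBot
| FAtom : atom -> form
| FAnd : form -> form -> form
| FOr  : form -> form -> form
| FImp : form -> form -> form
| FAll : type -> form -> form
| FEx  : type -> form -> form
| FNew : sN Sg -> form -> form.      (* N a:nu. phi        (binds BN 0) *)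

Definition Eqf (t u : tm) : form := FAtom (AEq t u).
Definition Frf (a t : tm) : form := FAtom (AFresh a t).

Fixpoint tm_openv (k : nat) (u t : tm) : tm :=
  match t with
  | BV i => if Nat.eqb i k then u else t
  | App f ts => App f (map (tm_openv k u) ts)
  | Swap a b t => Swap (tm_openv k u a) (tm_openv k u b) (tm_openv k u t)
  | Abs a t => Abs (tm_openv k u a) (tm_openv k u t)
  | _ => t
  end.

Fixpoint tm_openn (k : nat) (u t : tm) : tm :=
  match t with
  | BN i => if Nat.eqb i k then u else t
  | App f ts => App f (map (tm_openn k u) ts)
  | Swap a b t => Swap (tm_openn k u a) (tm_openn k u b) (tm_openn k u t)
  | Abs a t => Abs (tm_openn k u a) (tm_openn k u t)
  | _ => t
  end.

Definition atom_map (g : tm -> tm) (A : atom) : atom :=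
  match A with
  | AEq t u => AEq (g t) (g u)
  | AFresh a t => AFresh (g a) (g t)
  | ARel p ts => ARel p (map g ts)
  end.

Fixpoint form_openv (k : nat) (u : tm) (phi : form) : form :=
  match phi with
  | FTop => FTop | FBot => FBot
  | FAtom A => FAtom (atom_map (tm_openv k u) A)
  | FAnd A B => FAnd (form_openv k u A) (form_openv k u B)
  | FOr A B => FOr (form_openv k u A) (form_openv k u B)
  | FImp A B => FImp (form_openv k u A) (form_openv k u B)
  | FAll tau A => FAll tau (form_openv (S k) u A)
  | FEx tau A => FEx tau (form_openv (S k) u A)
  | FNew nu A => FNew nu (form_openv k u A)
  end.

Fixpoint form_openn (k : nat) (u : tm) (phi : form) : form :=
  match phi with
  | FTop => FTop | FBot => FBot
  | FAtom A => FAtom (atom_map (tm_openn k u) A)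
  | FAnd A B => FAnd (form_openn k u A) (form_openn k u B)
  | FOr A B => FOr (form_openn k u A) (form_openn k u B)
  | FImp A B => FImp (form_openn k u A) (form_openn k u B)
  | FAll tau A => FAll tau (form_openn k u A)
  | FEx tau A => FEx tau (form_openn k u A)
  | FNew nu A => FNew nu (form_openn (S k) u A)
  end.

(** Contexts  Sigma ::= . | Sigma, x:tau | Sigma # a:nu ,
    represented as lists with the most recent entry at the head. *)
Inductive entry : Type :=
| CV : nat -> type -> entry
| CN : nat -> sN Sg -> entry.

Definition ctx := list entry.

Definition entry_key (e : entry) : nat + nat :=
  match e with CV x _ => inl x | CN a _ => inr a end.

Definition ctx_ok (G : ctx) : Prop := NoDup (map entry_key G).

Definition var_in (G : ctx) (x : nat) : Prop := exists tau, In (CV x tau) G.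
Definition name_in (G : ctx) (a : nat) : Prop := exists nu, In (CN a nu) G.

Inductive typed (G : ctx) (bv : list type) (bn : list (sN Sg)) : tm -> type -> Prop :=
| ty_var x tau : In (CV x tau) G -> typed G bv bn (Var x) tau
| ty_bv i tau : nth_error bv i = Some tau -> typed G bv bn (BV i) tau
| ty_name a nu : In (CN a nu) G -> typed G bv bn (Name a) (TName nu)
| ty_bn i nu : nth_error bn i = Some nu -> typed G bv bn (BN i) (TName nu)
| ty_const c : typed G bv bn (Const c) (cty Sg c)
| ty_app f ts : Forall2 (typed G bv bn) ts (fst (fty Sg f)) ->
    typed G bv bn (App f ts) (snd (fty Sg f))
| ty_swap a b t nu tau : typed G bv bn a (TName nu) -> typed G bv bn b (TName nu) ->
    typed G bv bn t tau -> typed G bv bn (Swap a b t) tau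
| ty_abs a t nu tau : typed G bv bn a (TName nu) -> typed G bv bn t tau ->
    typed G bv bn (Abs a t) (TAbs nu tau).

Definition Tm (G : ctx) (t : tm) (tau : type) : Prop := typed G [] [] t tau.

Definition atom_wf (G : ctx) (bv : list type) (bn : list (sN Sg)) (A : atom) : Prop :=
  match A with
  | AEq t u => exists tau, typed G bv bn t tau /\ typed G bv bn u tau
  | AFresh a t => (exists nu, typed G bv bn a (TName nu)) /\ (exists tau, typed G bv bn t tau)
  | ARel p ts => Forall2 (typed G bv bn) ts (pty Sg p)
  end.

Fixpoint wff (G : ctx) (bv : list type) (bn : list (sN Sg)) (phi : form) : Prop :=
  match phi with
  | FTop | FBot => True
  | FAtom A => atom_wf G bv bn A
  | FAnd A B | FOr A B | FImp A B => wff G bv bn A /\ wff G bv bn B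
  | FAll tau A | FEx tau A => wff G (tau :: bv) bn A
  | FNew nu A => wff G bv (nu :: bn) A
  end.

Definition wf_form (G : ctx) (phi : form) : Prop := wff G [] [] phi.

Definition wf_seq (G : ctx) (Ga De : list form) : Prop :=
  ctx_ok G /\ Forall (wf_form G) Ga /\ Forall (wf_form G) De.

Fixpoint facts (G : ctx) (a : nat) (t : tm) : Prop :=
  match G with
  | [] => False
  | CV _ _ :: G' => facts G' a t
  | CN b _ :: G' => facts G' a t \/ (a = b /\ exists tau, Tm G' t tau)
  end.

Definition ctx_le (G G' : ctx) : Prop :=
  (forall t tau, Tm G t tau -> Tm G' t tau) /\
  (forall a t, facts G a t -> facts G' a t).

(** Instances  /\ Ps  ->  \/_i (/\ Qs_i)  of the nonlogical axioms
    (A2 is treated as the axiom E -> (a~b /\ t~u) \/ (a#u /\ t ~ (a b).u)).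
    Metavariables range over arbitrary terms; well-typedness in Sigma of the
    instance is ensured by the well-formedness of the sequents of the rule. *)
Inductive ax_inst (G : ctx) : list form -> list (list form) -> Prop :=
| ax_S1 a x : ax_inst G [] [[Eqf (Swap a a x) x]]
| ax_S2 a b x : ax_inst G [] [[Eqf (Swap a b (Swap a b x)) x]]
| ax_S3 a b : ax_inst G [] [[Eqf (Swap a b a) b]]
| ax_E1 a b c : ax_inst G [] [[Eqf (Swap a b (Const c)) (Const c)]]
(* E2 for every function symbol of the signature, including swapping and abstraction *)
| ax_E2_app a b f ts :
    ax_inst G [] [[Eqf (Swap a b (App f ts)) (App f (map (Swap a b) ts))]]
| ax_E2_swap a b c d t :
    ax_inst G [] [[Eqf (Swap a b (Swap c d t)) (Swap (Swap a b c) (Swap a b d) (Swap a b t))]]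
| ax_E2_abs a b c t :
    ax_inst G [] [[Eqf (Swap a b (Abs c t)) (Abs (Swap a b c) (Swap a b t))]]
(* E3 for every relation symbol, including equality and freshness *)
| ax_E3 a b A :
    ax_inst G [FAtom A] [[FAtom (atom_map (Swap a b) A)]]
| ax_F1 a b x : ax_inst G [Frf a x; Frf b x] [[Eqf (Swap a b x) x]]
| ax_F2 a b nu nu' : Tm G a (TName nu) -> Tm G b (TName nu') -> nu <> nu' ->
    ax_inst G [] [[Frf a b]]
| ax_F3 a : ax_inst G [Frf a a] []
| ax_F4 a b : ax_inst G [] [[Frf a b]; [Eqf a b]]
| ax_A1 a b x y : ax_inst G [Frf a y; Eqf x (Swap a b y)] [[Eqf (Abs a x) (Abs b y)]]
| ax_A2 a b t u : ax_inst G [Eqf (Abs a t) (Abs b u)]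
    [[Eqf a b; Eqf t u]; [Frf a u; Eqf t (Swap a b u)]].

(** Der n Sigma Gamma Delta  :  |-_n Sigma ; Gamma => Delta
    (a derivation of height at most n; zero-premise rules have height 0).
    Gamma, Delta are multisets, represented by lists up to permutation. *)
Inductive Der : nat -> ctx -> list form -> list form -> Prop :=
| d_init n G Ga De A : wf_seq G Ga De -> In (FAtom A) Ga -> In (FAtom A) De ->
    Der n G Ga De
| d_topR n G Ga De : wf_seq G Ga De -> In FTop De -> Der n G Ga De
| d_botL n G Ga De : wf_seq G Ga De -> In FBot Ga -> Der n G Ga De
| d_andL n G Ga De Ga0 A B : wf_seq G Ga De -> Permutation Ga (FAnd A B :: Ga0) ->
    Der n G (A :: B :: Ga0) De -> Der (S n) G Ga De
| d_andR n G Ga De De0 A B : wf_seq G Ga De -> Permutation De (FAnd A B :: De0) ->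
    Der n G Ga (A :: De0) -> Der n G Ga (B :: De0) -> Der (S n) G Ga De
| d_orL n G Ga De Ga0 A B : wf_seq G Ga De -> Permutation Ga (FOr A B :: Ga0) ->
    Der n G (A :: Ga0) De -> Der n G (B :: Ga0) De -> Der (S n) G Ga De
| d_orR n G Ga De De0 A B : wf_seq G Ga De -> Permutation De (FOr A B :: De0) ->
    Der n G Ga (A :: B :: De0) -> Der (S n) G Ga De
| d_impL n G Ga De Ga0 A B : wf_seq G Ga De -> Permutation Ga (FImp A B :: Ga0) ->
    Der n G Ga0 (A :: De) -> Der n G (B :: Ga0) De -> Der (S n) G Ga De
| d_impR n G Ga De De0 A B : wf_seq G Ga De -> Permutation De (FImp A B :: De0) ->
    Der n G (A :: Ga) (B :: De0) -> Der (S n) G Ga De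
| d_allL n G Ga De Ga0 tau A t : wf_seq G Ga De -> Permutation Ga (FAll tau A :: Ga0) ->
    Tm G t tau -> Der n G (form_openv 0 t A :: Ga) De -> Der (S n) G Ga De
| d_allR n G Ga De De0 tau A x : wf_seq G Ga De -> Permutation De (FAll tau A :: De0) ->
    ~ var_in G x -> Der n (CV x tau :: G) Ga (form_openv 0 (Var x) A :: De0) ->
    Der (S n) G Ga De
| d_exL n G Ga De Ga0 tau A x : wf_seq G Ga De -> Permutation Ga (FEx tau A :: Ga0) ->
    ~ var_in G x -> Der n (CV x tau :: G) (form_openv 0 (Var x) A :: Ga0) De ->
    Der (S n) G Ga De
| d_exR n G Ga De De0 tau A t : wf_seq G Ga De -> Permutation De (FEx tau A :: De0) ->
    Tm G t tau -> Der n G Ga (form_openv 0 t A :: De) -> Der (S n) G Ga De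
| d_newR n G Ga De De0 nu A a : wf_seq G Ga De -> Permutation De (FNew nu A :: De0) ->
    ~ name_in G a -> Der n (CN a nu :: G) Ga (form_openn 0 (Name a) A :: De0) ->
    Der (S n) G Ga De
| d_newL n G Ga De Ga0 nu A a : wf_seq G Ga De -> Permutation Ga (FNew nu A :: Ga0) ->
    ~ name_in G a -> Der n (CN a nu :: G) (form_openn 0 (Name a) A :: Ga0) De ->
    Der (S n) G Ga De
| d_eqR n G Ga De t tau : wf_seq G Ga De -> Tm G t tau ->
    Der n G (Eqf t t :: Ga) De -> Der (S n) G Ga De
(* (~S): P is an atom whose holes are the occurrences of BV 0 *)
| d_eqS n G Ga De Ga0 t u P : wf_seq G Ga De ->
    Permutation Ga (Eqf t u :: FAtom (atom_map (tm_openv 0 t) P) :: Ga0) ->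
    Der n G (FAtom (atom_map (tm_openv 0 u) P) :: Ga) De -> Der (S n) G Ga De
| d_ax n G Ga De Ga0 Ps Qss : wf_seq G Ga De -> ax_inst G Ps Qss -> Qss <> [] ->
    Permutation Ga (Ps ++ Ga0) ->
    (forall Qs, In Qs Qss -> Der n G (Qs ++ Ga) De) -> Der (S n) G Ga De
| d_ax0 n G Ga De Ga0 Ps : wf_seq G Ga De -> ax_inst G Ps [] ->
    Permutation Ga (Ps ++ Ga0) -> Der n G Ga De
(* (A3): a, x are (ordinary) variables *)
| d_A3 n G Ga De t nu sigma a x : wf_seq G Ga De -> Tm G t (TAbs nu sigma) ->
    ~ var_in G a -> ~ var_in G x -> a <> x ->
    Der n (CV x sigma :: CV a (TName nu) :: G) (Eqf t (Abs (Var a) (Var x)) :: Ga) De ->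
    Der (S n) G Ga De
| d_F n G Ga De a nu : wf_seq G Ga De -> ~ name_in G a ->
    Der n (CN a nu :: G) Ga De -> Der (S n) G Ga De
| d_fresh n G Ga De a t : wf_seq G Ga De -> facts G a t ->
    Der n G (Frf (Name a) t :: Ga) De -> Der (S n) G Ga De.

End NL.

(* Main.v *)
Require Import Defs.
From Stdlib Require Import List Permutation FinFun Arith Lia.
Import ListNotations.

Section R.
Variable S : Sig.

Lemma tm_ind' (P : tm S -> Prop) :
  (forall x, P (Var S x)) -> (forall i, P (BV S i)) -> (forall a, P (Name S a)) ->
  (forall i, P (BN S i)) -> (forall c, P (Const S c)) ->
  (forall f ts, Forall P ts -> P (App f ts)) ->
  (forall a b t, P a -> P b -> P t -> P (Swap a b t)) ->
  (forall a t, P a -> P t -> P (Abs a t)) -> forall t, P t.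
Proof.
  intros H1 H2 H3 H4 H5 H6 H7 H8.
  fix IH 1. intros t; destruct t.
  - apply H1. - apply H2. - apply H3. - apply H4. - apply H5.
  - apply H6. induction l as [|u l IHl]; constructor; auto.
  - apply H7; auto. - apply H8; auto.
Qed.

Variables (rv rn : nat -> nat).

Fixpoint rt (t : tm S) : tm S :=
  match t with
  | Var _ x => Var S (rv x)
  | Name _ a => Name S (rn a)
  | App f ts => App f (map rt ts)
  | Swap a b t => Swap (rt a) (rt b) (rt t)
  | Abs a t => Abs (rt a) (rt t)
  | t => t
  end.

Fixpoint rf (p : form S) : form S :=
  match p with
  | FTop _ => FTop S | FBot _ => FBot S
  | FAtom A => FAtom (atom_map rt A)
  | FAnd A B => FAnd (rf A) (rf B)
  | FOr A B => FOr (rf A) (rf B)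
  | FImp A B => FImp (rf A) (rf B)
  | FAll tau A => FAll tau (rf A)
  | FEx tau A => FEx tau (rf A)
  | FNew nu A => FNew nu (rf A)
  end.

Definition re (e : entry S) : entry S :=
  match e with CV x t => CV (rv x) t | CN _ a nu => CN S (rn a) nu end.
Definition rc (G : ctx S) : ctx S := map re G.

Lemma rt_openv k u t : rt (tm_openv k u t) = tm_openv k (rt u) (rt t).
Proof.
  induction t using tm_ind'; simpl; auto.
  - destruct (Nat.eqb i k); auto.
  - f_equal. rewrite !map_map. apply map_ext_Forall. eapply Forall_impl; [|exact H]. auto.
  - f_equal; auto.
  - f_equal; auto.
Qed.

Lemma rt_openn k u t : rt (tm_openn k u t) = tm_openn k (rt u) (rt t).
Proof.
  induction t using tm_ind'; simpl; auto.
  - destruct (Nat.eqb i k); auto.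
  - f_equal. rewrite !map_map. apply map_ext_Forall. eapply Forall_impl; [|exact H]. auto.
  - f_equal; auto.
  - f_equal; auto.
Qed.

Lemma ra_openv k u P : atom_map rt (atom_map (tm_openv k u) P) = atom_map (tm_openv k (rt u)) (atom_map rt P).
Proof. destruct P; simpl; rewrite ?rt_openv; auto. rewrite !map_map. f_equal. apply map_ext. intros; apply rt_openv. Qed.
Lemma ra_openn k u P : atom_map rt (atom_map (tm_openn k u) P) = atom_map (tm_openn k (rt u)) (atom_map rt P).
Proof. destruct P; simpl; rewrite ?rt_openn; auto. rewrite !map_map. f_equal. apply map_ext. intros; apply rt_openn. Qed.

Lemma rf_openv p : forall k u, rf (form_openv k u p) = form_openv k (rt u) (rf p).
Proof. induction p; intros; simpl; f_equal; auto using ra_openv. Qed.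
Lemma rf_openn p : forall k u, rf (form_openn k u p) = form_openn k (rt u) (rf p).
Proof. induction p; intros; simpl; f_equal; auto using ra_openn. Qed.

Lemma Forall2_map_l {A B} (P : A -> Prop) (R R' : A -> B -> Prop) g ts Ls :
  Forall P ts -> Forall2 R ts Ls -> (forall t tau, P t -> R t tau -> R' (g t) tau) ->
  Forall2 R' (map g ts) Ls.
Proof. intros HP H2 Hi. induction H2; simpl; constructor; inversion HP; subst; eauto. Qed.

Lemma Forall2_fix {A B} (P : A -> Prop) (R : A -> B -> Prop) g ts Ls :
  Forall P ts -> Forall2 R ts Ls -> (forall t tau, P t -> R t tau -> g t = t) ->
  map g ts = ts.
Proof. intros HP H2 Hi. induction H2; simpl; auto. inversion HP; subst. f_equal; eauto. Qed.

Section G.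
Variables (G G' : ctx S).
Hypothesis HV : forall x tau, In (CV x tau) G -> In (CV (rv x) tau) G'.
Hypothesis HN : forall a nu, In (CN S a nu) G -> In (CN S (rn a) nu) G'.

Lemma typed_ren bv bn t : forall tau, typed G bv bn t tau -> typed G' bv bn (rt t) tau.
Proof.
  induction t using tm_ind'; intros tau Ht; inversion Ht; subst; simpl; try (econstructor; eauto; fail).
  all: constructor; eapply Forall2_map_l; eauto; simpl; auto.
Qed.

Lemma wff_ren p : forall bv bn, wff G bv bn p -> wff G' bv bn (rf p).
Proof.
  induction p; intros bv bn H; simpl in *; try tauto.
  - destruct a; simpl in *.
    + destruct H as [tau [H1 H2]]. exists tau; split; apply typed_ren; auto.
    + destruct H as [[nu H1] [tau H2]]. split; [exists nu|exists tau]; apply typed_ren; auto.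
    + eapply Forall2_map_l with (P := fun _ => True); eauto. apply Forall_forall; auto.
      intros; apply typed_ren; auto.
  - destruct H; split; auto.
  - destruct H; split; auto.
  - destruct H; split; auto.
  - auto. - auto. - auto.
Qed.
End G.

Section Fix.
Variable G : ctx S.
Hypothesis FV : forall x tau, In (CV x tau) G -> rv x = x.
Hypothesis FN : forall a nu, In (CN S a nu) G -> rn a = a.

Lemma typed_fix bv bn t : forall tau, typed G bv bn t tau -> rt t = t.
Proof.
  induction t using tm_ind'; intros tau Ht; inversion Ht; subst; simpl; try (f_equal; eauto; fail).
  all: f_equal; eapply Forall2_fix; eauto; simpl; eauto.
Qed.

Lemma wff_fix p : forall bv bn, wff G bv bn p -> rf p = p.
Proof.
  induction p; intros bv bn H; simpl in *; try (f_equal; try tauto; eauto; fail).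
  - destruct a; simpl in *; f_equal; f_equal.
    + destruct H as [tau [H1 H2]]. eapply typed_fix; eauto.
    + destruct H as [tau [H1 H2]]. eapply typed_fix; eauto.
    + destruct H as [[nu H1] [tau H2]]. eapply typed_fix; eauto.
    + destruct H as [[nu H1] [tau H2]]. eapply typed_fix; eauto.
    + eapply Forall2_fix with (P := fun _ => True); eauto. apply Forall_forall; auto.
      intros; eapply typed_fix; eauto.
  - destruct H; f_equal; eauto.
  - destruct H; f_equal; eauto.
  - destruct H; f_equal; eauto.
Qed.

Lemma forms_fix L : Forall (wf_form G) L -> map rf L = L.
Proof. induction 1; simpl; f_equal; auto. eapply wff_fix; eauto. Qed.
End Fix.

Lemma rc_fix G : (forall x tau, In (CV x tau) G -> rv x = x) ->
  (forall a nu, In (CN S a nu) G -> rn a = a) -> rc G = G.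
Proof.
  induction G as [|e G IH]; intros H1 H2; simpl; auto.
  f_equal. destruct e; simpl; f_equal; eauto using in_eq.
  apply IH; intros; eauto using in_cons.
Qed.

Lemma In_rc_V G x tau : In (CV x tau) G -> In (CV (rv x) tau) (rc G).
Proof. intro H. apply (in_map re) in H. exact H. Qed.
Lemma In_rc_N G a nu : In (CN S a nu) G -> In (CN S (rn a) nu) (rc G).
Proof. intro H. apply (in_map re) in H. exact H. Qed.

Lemma typed_rc G bv bn t tau : typed G bv bn t tau -> typed (rc G) bv bn (rt t) tau.
Proof. apply typed_ren; auto using In_rc_V, In_rc_N. Qed.
Lemma wff_rc G bv bn p : wff G bv bn p -> wff (rc G) bv bn (rf p).
Proof. apply wff_ren; auto using In_rc_V, In_rc_N. Qed.

Lemma facts_rc G a t : facts G a t -> facts (rc G) (rn a) (rt t).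
Proof.
  induction G as [|e G IH]; simpl; auto. destruct e; simpl; auto.
  intros [H|[-> [tau H]]]; auto. right; split; auto. exists tau. apply typed_rc; auto.
Qed.

Hypothesis Iv : forall x y, rv x = rv y -> x = y.
Hypothesis In' : forall x y, rn x = rn y -> x = y.

Lemma ctx_ok_rc G : ctx_ok G -> ctx_ok (rc G).
Proof.
  unfold ctx_ok, rc. intro H.
  assert (E : map (@entry_key S) (map re G) =
     map (fun k => match k with inl x => inl (rv x) | inr a => inr (rn a) end) (map (@entry_key S) G)).
  { rewrite !map_map. apply map_ext. destruct a; reflexivity. }
  rewrite E. apply Injective_map_NoDup; auto.
  intros [x|x] [y|y] Hxy; inversion Hxy; f_equal; auto.
Qed.

Lemma var_in_rc G x : ~ var_in G x -> ~ var_in (rc G) (rv x).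
Proof.
  intros H [tau Hi]. apply H. unfold rc in Hi. apply in_map_iff in Hi as [e [He Hi]].
  destruct e; simpl in He; inversion He; subst. apply Iv in H1; subst. exists tau; auto.
Qed.
Lemma name_in_rc G x : ~ name_in G x -> ~ name_in (rc G) (rn x).
Proof.
  intros H [tau Hi]. apply H. unfold rc in Hi. apply in_map_iff in Hi as [e [He Hi]].
  destruct e; simpl in He; inversion He; subst. apply In' in H1; subst. exists tau; auto.
Qed.

Lemma wf_seq_rc G Ga De : wf_seq G Ga De -> wf_seq (rc G) (map rf Ga) (map rf De).
Proof.
  intros [H1 [H2 H3]]. split; [apply ctx_ok_rc; auto|split]; apply Forall_map;
  eapply Forall_impl; try eassumption; intros; apply wff_rc; auto.
Qed.

Lemma ax_rc G Ps Qss : ax_inst G Ps Qss -> ax_inst (rc G) (map rf Ps) (map (map rf) Qss).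
Proof.
  destruct 1; simpl.
  - apply ax_S1. - apply ax_S2. - apply ax_S3. - apply ax_E1.
  - pose proof (ax_E2_app (rc G) (rt a) (rt b) f (map rt ts)) as H.
    rewrite !map_map in H. rewrite map_map. exact H.
  - apply ax_E2_swap. - apply ax_E2_abs.
  - pose proof (ax_E3 (rc G) (rt a) (rt b) (atom_map rt A)) as H.
    replace (atom_map rt (atom_map (Swap a b) A)) with (atom_map (Swap (rt a) (rt b)) (atom_map rt A)); auto.
    destruct A; simpl; auto. rewrite !map_map; auto.
  - apply ax_F1.
  - eapply ax_F2; eauto using typed_rc.
    all: apply typed_rc; eauto.
  - apply ax_F3. - apply ax_F4. - apply ax_A1. - apply ax_A2.
Qed.

Lemma In_map_rf a L : In a L -> In (rf a) (map rf L).
Proof. apply in_map. Qed.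

Ltac notrc G := lazymatch G with rc _ => fail | _ => idtac end.
Ltac notmap L := lazymatch L with map _ _ => fail | _ => idtac end.

Theorem Der_ren n G Ga De : Der n G Ga De -> Der n (rc G) (map rf Ga) (map rf De).
Proof.
  induction 1;
  repeat match goal with
  | H : wf_seq ?G _ _ |- _ => notrc G; apply wf_seq_rc in H
  | H : Permutation ?L _ |- _ => notmap L; apply (Permutation_map rf) in H; simpl in H; rewrite ?map_app in H
  | H : In _ ?L |- _ => notmap L; apply In_map_rf in H; simpl in H
  | H : ~ var_in ?G _ |- _ => notrc G; apply var_in_rc in H
  | H : ~ name_in ?G _ |- _ => notrc G; apply name_in_rc in H
  | H : Tm ?G _ _ |- _ => notrc G; apply typed_rc in H
  | H : facts ?G _ _ |- _ => notrc G; apply facts_rc in H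
  end; simpl in *; rewrite ?rf_openv, ?rf_openn in *.
  - eapply d_init; eauto.
  - eapply d_topR; eauto.
  - eapply d_botL; eauto.
  - eapply d_andL; eauto.
  - eapply d_andR; eauto.
  - eapply d_orL; eauto.
  - eapply d_orR; eauto.
  - eapply d_impL; eauto.
  - eapply d_impR; eauto.
  - eapply d_allL; eauto.
  - eapply d_allR; eauto.
  - eapply d_exL; eauto.
  - eapply d_exR; eauto.
  - eapply d_newR; eauto.
  - eapply d_newL; eauto.
  - eapply d_eqR; eauto.
  - rewrite ra_openv in H0. eapply d_eqS; eauto. rewrite <- ra_openv. exact IHDer.
  - eapply d_ax; eauto using ax_rc.
    + destruct Qss; simpl; congruence.
    + intros Qs HQ. apply in_map_iff in HQ as [Q0 [<- HQ]]. rewrite <- map_app. auto.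
  - eapply d_ax0; eauto. apply (ax_rc _ _ _ H0).
  - eapply d_A3 with (a := rv a) (x := rv x); eauto.
  - eapply d_F; eauto.
  - eapply d_fresh; eauto.
Qed.
End R.

Section W.
Variable S : Sig.

Definition sw (x y z : nat) := if Nat.eqb z x then y else if Nat.eqb z y then x else z.
Lemma sw_inj x y : forall a b, sw x y a = sw x y b -> a = b.
Proof.
  unfold sw; intros a b.
  destruct (Nat.eqb_spec a x), (Nat.eqb_spec b x), (Nat.eqb_spec a y), (Nat.eqb_spec b y); lia.
Qed.
Lemma sw_l x y : sw x y x = y.
Proof. unfold sw; rewrite Nat.eqb_refl; auto. Qed.
Lemma sw_o x y z : z <> x -> z <> y -> sw x y z = z.
Proof. unfold sw; intros; destruct (Nat.eqb_spec z x), (Nat.eqb_spec z y); lia. Qed.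
Lemma id_inj : forall a b : nat, (fun x => x) a = (fun x => x) b -> a = b.
Proof. auto. Qed.

Definition InclV (G G' : ctx S) := forall x tau, In (CV x tau) G -> In (CV x tau) G'.
Definition InclN (G G' : ctx S) := forall a nu, In (CN S a nu) G -> In (CN S a nu) G'.

Lemma le_incl (G G' : ctx S) : ctx_le G G' -> InclV G G' /\ InclN G G'.
Proof.
  intros [H _]. split; intros ? ? Hi.
  - assert (T : Tm G (Var S x) tau) by (constructor; auto). apply H in T. inversion T; auto.
  - assert (T : Tm G (Name S a) (TName nu)) by (constructor; auto). apply H in T. inversion T; auto.
Qed.

Lemma typed_mono G G' bv bn t tau : InclV G G' -> InclN G G' ->
  typed G bv bn t tau -> typed G' bv bn t tau.
Proof.
  intros HV HN Ht.
  pose proof (typed_ren S (fun x => x) (fun x => x) G G' HV HN bv bn t tau Ht) as H.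
  rewrite (typed_fix S (fun x => x) (fun x => x) G (fun _ _ _ => eq_refl) (fun _ _ _ => eq_refl) bv bn t tau Ht) in H. exact H.
Qed.

Lemma wff_mono G G' bv bn p : InclV G G' -> InclN G G' ->
  wff G bv bn p -> wff G' bv bn p.
Proof.
  intros HV HN Ht.
  pose proof (wff_ren S (fun x => x) (fun x => x) G G' HV HN p bv bn Ht) as H.
  rewrite (wff_fix S (fun x => x) (fun x => x) G (fun _ _ _ => eq_refl) (fun _ _ _ => eq_refl) p bv bn Ht) in H. exact H.
Qed.

Lemma wf_seq_mono G G' Ga De : InclV G G' -> InclN G G' -> ctx_ok G' ->
  wf_seq G Ga De -> wf_seq G' Ga De.
Proof.
  intros HV HN Hok [_ [H1 H2]]. split; auto. split; eapply Forall_impl; try eassumption;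
  intros; eapply wff_mono; eauto.
Qed.

Lemma ax_mono (G G' : ctx S) Ps Qss : (forall t tau, Tm G t tau -> Tm G' t tau) ->
  ax_inst G Ps Qss -> ax_inst G' Ps Qss.
Proof. intros H; destruct 1; try constructor. eapply ax_F2; eauto. Qed.

Lemma ctx_le_cons (G G' : ctx S) e : ctx_le G G' -> ctx_le (e :: G) (e :: G').
Proof.
  intros Hle. destruct (le_incl _ _ Hle) as [HV HN]. split.
  - intros t tau. apply typed_mono.
    + intros x tau' [E|Hi]; [left|right]; auto.
    + intros x tau' [E|Hi]; [left|right]; auto.
  - destruct e; simpl; intros a u Hf.
    + apply Hle; auto.
    + destruct Hf as [Hf|[E [tau Ht]]]; [left; apply Hle; auto|right; split; auto].
      exists tau; apply Hle; auto.
Qed.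

Definition key (e : entry S) := match e with CV x _ => x | CN _ a _ => a end.

Lemma fresh_nat (L : list nat) : exists x, ~ In x L.
Proof.
  exists (1 + list_max L). intro H.
  assert (Hm : list_max L <= list_max L) by lia. apply list_max_le in Hm.
  rewrite Forall_forall in Hm. apply Hm in H. lia.
Qed.

Lemma freshV (G : ctx S) y : exists x, ~ var_in G x /\ x <> y.
Proof.
  destruct (fresh_nat (y :: map key G)) as [x Hx]. exists x. split.
  - intros [tau Hi]. apply Hx. right. apply (in_map key) in Hi. exact Hi.
  - intro E; apply Hx; left; auto.
Qed.
Lemma freshN (G : ctx S) : exists x, ~ name_in G x.
Proof.
  destruct (fresh_nat (map key G)) as [x Hx]. exists x.
  intros [tau Hi]. apply Hx. apply (in_map key) in Hi. exact Hi.
Qed.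

Lemma ok_consV (G : ctx S) x tau : ctx_ok G -> ~ var_in G x -> ctx_ok (CV x tau :: G).
Proof.
  unfold ctx_ok; simpl; intros H Hx. constructor; auto.
  intro Hi. apply in_map_iff in Hi as [e [He Hi]]. destruct e; simpl in He; inversion He; subst.
  apply Hx; eexists; eauto.
Qed.
Lemma ok_consN (G : ctx S) x nu : ctx_ok G -> ~ name_in G x -> ctx_ok (CN S x nu :: G).
Proof.
  unfold ctx_ok; simpl; intros H Hx. constructor; auto.
  intro Hi. apply in_map_iff in Hi as [e [He Hi]]. destruct e; simpl in He; inversion He; subst.
  apply Hx; eexists; eauto.
Qed.

Lemma var_in_cons (G : ctx S) x y tau : ~ var_in G x -> x <> y -> ~ var_in (CV y tau :: G) x.
Proof. intros H1 H2 [t [E|Hi]]; [inversion E; auto|apply H1; eexists; eauto]. Qed.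


Lemma fixV (G G' : ctx S) x x' : InclV G G' -> ~ var_in G x -> ~ var_in G' x' ->
  forall y tau, In (CV y tau) G -> sw x x' y = y.
Proof.
  intros HV Hx Hx' y tau Hi. apply sw_o; intro E; subst.
  - apply Hx; eexists; eauto.
  - apply Hx'; eexists; eauto.
Qed.
Lemma fixN (G G' : ctx S) x x' : InclN G G' -> ~ name_in G x -> ~ name_in G' x' ->
  forall y tau, In (CN S y tau) G -> sw x x' y = y.
Proof.
  intros HV Hx Hx' y tau Hi. apply sw_o; intro E; subst.
  - apply Hx; eexists; eauto.
  - apply Hx'; eexists; eauto.
Qed.

Lemma renV n (G G' : ctx S) x x' P Ga De : InclV G G' -> ~ var_in G x -> ~ var_in G' x' ->
  Der n (P ++ G) Ga De ->
  Der n (map (re S (sw x x') (fun a => a)) P ++ G) (map (rf S (sw x x') (fun a => a)) Ga)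
     (map (rf S (sw x x') (fun a => a)) De).
Proof.
  intros HV Hx Hx' D.
  pose proof (Der_ren S (sw x x') (fun a => a) (sw_inj x x') id_inj _ _ _ _ D) as R.
  unfold rc in R. rewrite map_app in R. fold (rc S (sw x x') (fun a => a) G) in R.
  rewrite (rc_fix S _ _ G (fixV G G' x x' HV Hx Hx') (fun _ _ _ => eq_refl)) in R. exact R.
Qed.
Lemma renN n (G G' : ctx S) x x' P Ga De : InclN G G' -> ~ name_in G x -> ~ name_in G' x' ->
  Der n (P ++ G) Ga De ->
  Der n (map (re S (fun a => a) (sw x x')) P ++ G) (map (rf S (fun a => a) (sw x x')) Ga)
     (map (rf S (fun a => a) (sw x x')) De).
Proof.
  intros HV Hx Hx' D.
  pose proof (Der_ren S (fun a => a) (sw x x') id_inj (sw_inj x x') _ _ _ _ D) as R.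
  unfold rc in R. rewrite map_app in R. fold (rc S (fun a => a) (sw x x') G) in R.
  rewrite (rc_fix S _ _ G (fun _ _ _ => eq_refl) (fixN G G' x x' HV Hx Hx')) in R. exact R.
Qed.
End W.

Lemma perm_wf (S : Sig) (G : ctx S) L p L0 : Forall (wf_form G) L -> Permutation L (p :: L0) ->
  wf_form G p /\ Forall (wf_form G) L0.
Proof. intros H P. eapply Permutation_Forall in H; [|exact P]. inversion H; auto. Qed.

Theorem weak (S : Sig) n : forall (G G' : ctx S) Ga De, Der n G Ga De -> ctx_ok G' -> ctx_le G G' -> Der n G' Ga De.
Proof.
  induction n as [|n IH]; intros G G' Ga De D Hok Hle;
  destruct (le_incl S _ _ Hle) as [HV HN];
  pose proof (proj1 Hle) as HT; pose proof (proj2 Hle) as HF;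
  inversion D; subst;
  match goal with H : wf_seq G _ _ |- _ => pose proof H as W0; apply (wf_seq_mono S _ G' _ _ HV HN Hok) in H end.
  all: try (econstructor; eauto using ax_mono; fail).
  all: try (econstructor; eauto using ax_mono; [idtac]; intros; eapply IH; eauto; fail).
  all: destruct W0 as [_ [WGa WDe]].
  -
    destruct (freshV S G' 0) as [x' [Hx' _]].
    destruct (perm_wf S G _ _ _ WDe H1) as [WA WDe0].
    pose proof (renV S n G G' x x' [CV x tau] _ _ HV H2 Hx' H3) as R. simpl in R.
    rewrite rf_openv in R. simpl in R. rewrite sw_l in R.
    rewrite (forms_fix S _ _ G (fixV S G G' x x' HV H2 Hx') (fun _ _ _ => eq_refl) _ WGa) in R.
    rewrite (forms_fix S _ _ G (fixV S G G' x x' HV H2 Hx') (fun _ _ _ => eq_refl) _ WDe0) in R.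
    rewrite (wff_fix S _ _ G (fixV S G G' x x' HV H2 Hx') (fun _ _ _ => eq_refl) A _ _ WA) in R.
    eapply d_allR with (x := x'); eauto. eapply IH; [exact R| |].
    + apply ok_consV; auto.
    + apply ctx_le_cons; auto.
  -
    destruct (freshV S G' 0) as [x' [Hx' _]].
    destruct (perm_wf S G _ _ _ WGa H1) as [WA WGa0].
    pose proof (renV S n G G' x x' [CV x tau] _ _ HV H2 Hx' H3) as R. simpl in R.
    rewrite rf_openv in R. simpl in R. rewrite sw_l in R.
    rewrite (forms_fix S _ _ G (fixV S G G' x x' HV H2 Hx') (fun _ _ _ => eq_refl) _ WDe) in R.
    rewrite (forms_fix S _ _ G (fixV S G G' x x' HV H2 Hx') (fun _ _ _ => eq_refl) _ WGa0) in R.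
    rewrite (wff_fix S _ _ G (fixV S G G' x x' HV H2 Hx') (fun _ _ _ => eq_refl) A _ _ WA) in R.
    eapply d_exL with (x := x'); eauto. eapply IH; [exact R| |].
    + apply ok_consV; auto.
    + apply ctx_le_cons; auto.
  -
    destruct (freshN S G') as [x' Hx'].
    destruct (perm_wf S G _ _ _ WDe H1) as [WA WDe0].
    pose proof (renN S n G G' a x' [CN S a nu] _ _ HN H2 Hx' H3) as R. simpl in R.
    rewrite rf_openn in R. simpl in R. rewrite sw_l in R.
    rewrite (forms_fix S _ _ G (fun _ _ _ => eq_refl) (fixN S G G' a x' HN H2 Hx') _ WGa) in R.
    rewrite (forms_fix S _ _ G (fun _ _ _ => eq_refl) (fixN S G G' a x' HN H2 Hx') _ WDe0) in R.
    rewrite (wff_fix S _ _ G (fun _ _ _ => eq_refl) (fixN S G G' a x' HN H2 Hx') A _ _ WA) in R.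
    eapply d_newR with (a := x'); eauto. eapply IH; [exact R| |].
    + apply ok_consN; auto.
    + apply ctx_le_cons; auto.
  -
    destruct (freshN S G') as [x' Hx'].
    destruct (perm_wf S G _ _ _ WGa H1) as [WA WGa0].
    pose proof (renN S n G G' a x' [CN S a nu] _ _ HN H2 Hx' H3) as R. simpl in R.
    rewrite rf_openn in R. simpl in R. rewrite sw_l in R.
    rewrite (forms_fix S _ _ G (fun _ _ _ => eq_refl) (fixN S G G' a x' HN H2 Hx') _ WDe) in R.
    rewrite (forms_fix S _ _ G (fun _ _ _ => eq_refl) (fixN S G G' a x' HN H2 Hx') _ WGa0) in R.
    rewrite (wff_fix S _ _ G (fun _ _ _ => eq_refl) (fixN S G G' a x' HN H2 Hx') A _ _ WA) in R.
    eapply d_newL with (a := x'); eauto. eapply IH; [exact R| |].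
    + apply ok_consN; auto.
    + apply ctx_le_cons; auto.
  -
    destruct (freshV S G' x) as [a' [Ha' Ha'x]].
    pose proof (renV S n G G' a a' [CV x sigma; CV a (TName nu)] _ _ HV H2 Ha' H5) as R1. simpl in R1.
    rewrite sw_l in R1. rewrite (sw_o a a' x) in R1 by (intro E; subst; auto).
    rewrite (typed_fix S _ _ G (fixV S G G' a a' HV H2 Ha') (fun _ _ _ => eq_refl) _ _ t _ H1) in R1.
    rewrite (forms_fix S _ _ G (fixV S G G' a a' HV H2 Ha') (fun _ _ _ => eq_refl) _ WGa) in R1.
    rewrite (forms_fix S _ _ G (fixV S G G' a a' HV H2 Ha') (fun _ _ _ => eq_refl) _ WDe) in R1.
    destruct (freshV S G' a') as [x' [Hx' Hx'a]].
    assert (HV2 : InclV S (CV a' (TName nu) :: G) (CV a' (TName nu) :: G')).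
    { intros y tau [E|Hi]; [left|right]; auto. }
    assert (Hx2 : ~ var_in (CV a' (TName nu) :: G) x) by (apply var_in_cons; auto).
    assert (Hx2' : ~ var_in (CV a' (TName nu) :: G') x') by (apply var_in_cons; auto).
    pose proof (renV S n _ _ x x' [CV x sigma] _ _ HV2 Hx2 Hx2' R1) as R2. simpl in R2.
    rewrite sw_l in R2. rewrite (sw_o x x' a') in R2 by auto.
    rewrite (typed_fix S _ _ G (fixV S G G' x x' HV H3 Hx') (fun _ _ _ => eq_refl) _ _ t _ H1) in R2.
    rewrite (forms_fix S _ _ G (fixV S G G' x x' HV H3 Hx') (fun _ _ _ => eq_refl) _ WGa) in R2.
    rewrite (forms_fix S _ _ G (fixV S G G' x x' HV H3 Hx') (fun _ _ _ => eq_refl) _ WDe) in R2.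
    eapply d_A3 with (a := a') (x := x'); eauto. eapply IH; [exact R2| |].
    + apply ok_consV; auto. apply ok_consV; auto.
    + apply ctx_le_cons, ctx_le_cons; auto.
  -
    destruct (freshN S G') as [x' Hx'].
    pose proof (renN S n G G' a x' [CN S a nu] _ _ HN H1 Hx' H2) as R. simpl in R.
    rewrite sw_l in R.
    rewrite (forms_fix S _ _ G (fun _ _ _ => eq_refl) (fixN S G G' a x' HN H1 Hx') _ WGa) in R.
    rewrite (forms_fix S _ _ G (fun _ _ _ => eq_refl) (fixN S G G' a x' HN H1 Hx') _ WDe) in R.
    eapply d_F with (a := x'); eauto. eapply IH; [exact R| |].
    + apply ok_consN; auto.
    + apply ctx_le_cons; auto.
Qed.

Theorem mainTheorem19 (S : Sig) (n : nat) (Sg Sg' : ctx S) (Ga De : list (form S)) :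
  Der n Sg Ga De -> ctx_ok Sg' -> ctx_le Sg Sg' -> Der n Sg' Ga De.
Proof. intros D Hok Hle. exact (weak S n Sg Sg' Ga De D Hok Hle). Qed.
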